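(* Let $(J,S)$ be an irreducible and ergodic homogeneous $d$-dimensional multi-time Markov renewal chain, and let $\nu=(\nu_1,\dots,\nu_s)$ be the stationary distribution of the embedded chain $J$. Then for all $j\in E$ and $1\le u,v\le d$: $$\mu^{(u)}_{jj}=\frac{\sum_{i=1}^s\nu_i m^{[u]}_i}{\nu_j},\qquad \mu_{jj}=\frac{\sum_{i=1}^s\nu_i m_i}{\nu_j},$$ $$\mu^{(u,v)}_{jj}=\frac{\sum_{i=1}^s\nu_i m^{[u,v]}_i}{\nu_j}+\frac{\sum_{i=1}^s\sum_{r\ne j}\nu_i p_{ir}\big[m^{[u]}_{ir}\mu^{(v)}_{rj}+m^{[v]}_{ir}\mu^{(u)}_{rj}\big]}{\nu_j}.$$
   Context: $E=\{1,\dots,s\}$; $\mathbb{N}^d$ has the componentwise partial order, $k<l$ meaning $k\le l$, $k\ne l$. A homogeneous $d$-dimensional multi-time Markov renewal chain is a process $(J_n,S_n)_{n\in\mathbb{N}}$, $J_n\in E$, $S_n=(S^{[1]}_n,\dots,S^{[d]}_n)\in\mathbb{N}^d$, $S_0=0_d$, $S_n<S_{n+1}$, with a.s. $\mathbb{P}(J_{n+1}=j,S_{n+1}-S_n=k\mid J_{0:n},S_{0:n})=q_{J_nj}(k)$, $q_{ij}(k)=\mathbb{P}(J_{n+1}=j,S_{n+1}-S_n=k\mid J_n=i)$ independent of $n$. $X_{n+1}=S_{n+1}-S_n$ with coordinates $X^{[u]}_{n+1}$. $p_{ij}=\sum_kq_{ij}(k)$ are the transition probabilities of $J$. $\mathbb{E}_i$: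 expectation given $J_0=i$. Moments: $m^{[u]}_i=\mathbb{E}[X^{[u]}_{n+1}\mid J_n=i]$, $m_i=(m^{[1]}_i,\dots,m^{[d]}_i)$, $m^{[u,v]}_i=\mathbb{E}[X^{[u]}_{n+1}X^{[v]}_{n+1}\mid J_n=i]$, $m^{[u]}_{ir}=\mathbb{E}[X^{[u]}_{n+1}\mid J_n=i,J_{n+1}=r]$. With $m_j=\min\{l\ge1:J_l=j\}$ and $T_j=S_{m_j}$ (coordinates $T^{[u]}_j$): $\mu^{(u)}_{ij}=\mathbb{E}_i[T^{[u]}_j]$, $\mu_{ij}=(\mu^{(1)}_{ij},\dots,\mu^{(d)}_{ij})$, $\mu^{(u,v)}_{ij}=\mathbb{E}_i[T^{[u]}_jT^{[v]}_j]$. For each $u$, $(J,S^{[u]})$ is the marginal one-dimensional-time Markov renewal chain with kernel $q^{[u]}_{ij}(k)=\sum_{k_{1:d}:k_u=k}q_{ij}(k_{1:d})$. The chain $(J,S)$ is irreducible if $J$ is irreducible; it is ergodic if every marginal chain $(J,S^{[u]})$ is positive recurrent (each state $j$ has a.s. finite return time $T^{[u]}_j$ with finite mean) and aperiodic (the distribution of each return time $T^{[u]}_j$ has period $1$). *)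

(* Defs.v *)
From HB Require Import structures.
From mathcomp Require Import all_boot all_order all_algebra.
From mathcomp Require Import all_classical all_reals all_analysis.
Set Implicit Arguments. Unset Strict Implicit. Unset Printing Implicit Defensive.
Import Order.TTheory GRing.Theory Num.Theory.
Local Open Scope classical_set_scope.
Local Open Scope ring_scope.
Local Open Scope ereal_scope.

(* State space E = 'I_s, time space N^d = {ffun 'I_d -> nat}.
   A d-dimensional multi-time Markov renewal chain (J,S) is determined in law by
   its initial state and its semi-Markov kernel
     q i j k = P(J_{n+1} = j, S_{n+1} - S_n = k | J_n = i).                    *)
Section MTMRC.
Variables (R : realType) (s d : nat).
Variable q : 'I_s -> 'I_s -> {ffun 'I_d -> nat} -> R.

Definition zero_time : {ffun 'I_d -> nat} := [ffun => 0%N].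

(* q is a semi-Markov kernel of a chain with S_n < S_{n+1} (componentwise
   order, strict), i.e. increments are nonzero elements of N^d. *)
Definition is_mt_kernel : Prop :=
  (forall i j k, (0 <= q i j k)%R) /\
  (forall i j, q i j zero_time = 0%R) /\
  (forall i, \sum_(j < s) \esum_(k in [set: {ffun 'I_d -> nat}]) (q i j k)%:E = 1).

Definition pE (i j : 'I_s) : \bar R := \esum_(k in [set: {ffun 'I_d -> nat}]) (q i j k)%:E.
Definition p (i j : 'I_s) : R := fine (pE i j).

Definition irreducible : Prop :=
  forall i j : 'I_s, connect (fun a b => (0 < p a b)%R) i j.

Definition stationary (nu : 'I_s -> R) : Prop :=
  (forall i, (0 <= nu i)%R) /\ (\sum_(i < s) nu i = 1)%R /\
  (forall j, \sum_(i < s) nu i * p i j = nu j)%R.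

(* A trajectory (J_1,X_1),...,(J_n,X_n) of the chain after time 0. *)
Definition traj := seq ('I_s * {ffun 'I_d -> nat}).

Fixpoint traj_prob (i : 'I_s) (t : traj) : R :=
  match t with
  | [::] => 1%R
  | (j, k) :: t' => (q i j k * traj_prob j t')%R
  end.

(* the trajectory is exactly the part up to the first passage time m_j:
   n >= 1, J_n = j and J_l <> j for 1 <= l < n *)
Fixpoint first_passage (j : 'I_s) (t : traj) : bool :=
  match t with
  | [::] => false
  | (x, _) :: t' => if t' is [::] then x == j else (x != j) && first_passage j t'
  end.

Definition FP (j : 'I_s) : set traj := [set t | first_passage j t].

Definition coordS (u : 'I_d) (t : traj) : nat := \sum_(e <- t) e.2 u.

(* P_i(m_j < oo) *)
Definition prob_hit (i j : 'I_s) : \bar R :=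
  \esum_(t in FP j) (traj_prob i t)%:E.

(* P_i(m_j < oo, T^[u]_j = n) *)
Definition prob_T (u : 'I_d) (i j : 'I_s) (n : nat) : \bar R :=
  \esum_(t in [set t | FP j t /\ coordS u t = n]) (traj_prob i t)%:E.

(* mu^(u)_ij = E_i[T^[u]_j] (the chain hits j a.s. in all uses below) *)
Definition mu1 (u : 'I_d) (i j : 'I_s) : \bar R :=
  \esum_(t in FP j) (traj_prob i t)%:E * ((coordS u t)%:R)%:E.

Definition mu (i j : 'I_s) : 'I_d -> \bar R := fun u => mu1 u i j.

Definition mu2 (u v : 'I_d) (i j : 'I_s) : \bar R :=
  \esum_(t in FP j) (traj_prob i t)%:E * ((coordS u t * coordS v t)%:R)%:E.

Definition m1 (u : 'I_d) (i : 'I_s) : \bar R :=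
  \sum_(j < s) \esum_(k in [set: {ffun 'I_d -> nat}]) (q i j k * (k u)%:R)%:E.
Definition mvec (i : 'I_s) : 'I_d -> \bar R := fun u => m1 u i.
Definition m2 (u v : 'I_d) (i : 'I_s) : \bar R :=
  \sum_(j < s) \esum_(k in [set: {ffun 'I_d -> nat}]) (q i j k * (k u * k v)%:R)%:E.
(* m^[u]_ir = E[X^[u]_{n+1} | J_n = i, J_{n+1} = r]  (set to 0 if p_ir = 0,
   where the conditional expectation is undefined; it only appears multiplied
   by p_ir) *)
Definition m1c (u : 'I_d) (i r : 'I_s) : \bar R :=
  if p i r == 0%R then 0
  else (\esum_(k in [set: {ffun 'I_d -> nat}]) (q i r k * (k u)%:R)%:E) * ((p i r)^-1)%:E.

(* marginal chain (J, S^[u]): state j positive recurrent and aperiodic *)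
Definition pos_recurrent (u : 'I_d) (j : 'I_s) : Prop :=
  prob_hit j j = 1 /\ mu1 u j j < +oo.

Definition aperiodic_state (u : 'I_d) (j : 'I_s) : Prop :=
  forall r : nat, (forall n, 0 < prob_T u j j n -> (r %| n)%N) -> r = 1%N.

Definition ergodic : Prop :=
  forall (u : 'I_d) (j : 'I_s), pos_recurrent u j /\ aperiodic_state u j.

End MTMRC.

(* Main.v *)
Require Import Defs.
From HB Require Import structures.
From mathcomp Require Import all_boot all_order all_algebra.
From mathcomp Require Import all_classical all_reals all_analysis.
From mathcomp Require Import ring lra.
Import Order.TTheory GRing.Theory Num.Theory.
Local Open Scope classical_set_scope.
Local Open Scope ring_scope.
Local Open Scope ereal_scope.
Set Implicit Arguments. Unset Strict Implicit. Unset Printing Implicit Defensive.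
Section Aux.
Variable R : realType.

Lemma esum_ord (s : nat) (G : 'I_s -> \bar R) : (forall r, 0 <= G r) ->
  \esum_(r in [set: 'I_s]) G r = \sum_(r < s) G r.
Proof.
move=> G0; rewrite esum_fset; [|exact: finite_finset|by move=> *; exact: G0].
rewrite -big_enum /= [RHS]fsbig_seq ?enum_uniq //.
congr (\big[_/_]_(a \in _) _); apply/seteqP; split => x //= _; by rewrite mem_enum.
Qed.

Lemma esumZl (T : choiceType) (I : set T) (c : R) (a : T -> \bar R) :
  (0 <= c)%R -> (forall t, 0 <= a t) ->
  \esum_(t in I) (c%:E * a t) = c%:E * \esum_(t in I) a t.
Proof.
move=> c0 a0; rewrite /esum -ereal_supZl //; last first.
  by apply/set0P; exists 0; exists set0; [exact: fsets_set0|rewrite fsbig_set0].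
congr ereal_sup; apply/seteqP; split => x /=.
  move=> [X [finX XI] <-].
  exists (\sum_(i \in X) a i); first by exists X.
  by rewrite !fsbig_finite // ge0_sume_distrr.
move=> [y [X [finX XI] <-] <-]; exists X => //.
by rewrite !fsbig_finite // ge0_sume_distrr.
Qed.

Lemma esum_term (T : choiceType) (I : set T) (a : T -> \bar R) t :
  I t -> a t <= \esum_(i in I) a i.
Proof.
move=> It; apply: esum_ge; exists [set t].
  by split; [exact: finite_set1|move=> x ->].
by rewrite fsbig_set1.
Qed.

Lemma esumZr (T : choiceType) (I : set T) (c : \bar R) (a : T -> \bar R) :
  0 <= c -> (forall t, 0 <= a t) ->
  \esum_(t in I) (a t * c) = (\esum_(t in I) a t) * c.
Proof.
move=> c0 a0; move: c0; case: c => [x| |] //= x0.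
  rewrite muleC -esumZl //; apply: eq_esum => t _; by rewrite muleC.
have [/eqP e0|] := boolP (\esum_(t in I) a t == 0).
  have at0 : forall t, I t -> a t = 0.
    move=> t It; apply/eqP; rewrite eq_le a0 andbT -e0.
    exact: esum_term.
  rewrite e0 mul0e; apply: esum1 => t It; by rewrite at0 // mul0e.
move=> en0.
case: (pselect (exists2 t, I t & 0 < a t)) => [[t It at0]|H]; last first.
  move/negP: en0; elim; apply/eqP; apply: esum1 => t It; apply/eqP.
  rewrite eq_le a0 andbT leNgt; apply/negP => h; apply: H; by exists t.
have ep : 0 < \esum_(i in I) a i by apply: lt_le_trans (esum_term _ It).
rewrite gt0_muley //; apply/eqP; rewrite eq_le leey /=.
apply: le_trans (esum_term (fun t => a t * +oo) It).
by rewrite gt0_muley.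
Qed.


Lemma esum_sub (T : choiceType) (A B : set T) (a : T -> \bar R) :
  A `<=` B -> (forall t, 0 <= a t) ->
  \esum_(t in A) a t <= \esum_(t in B) a t.
Proof.
move=> AB a0; apply: ge_ereal_sup => _ [X [finX XA] <-]; apply: esum_ge.
exists X => //; split => //; exact: subset_trans XA AB.
Qed.

Lemma esum_le_lim (T : choiceType) (A : nat -> set T) (B : set T)
  (a : T -> \bar R) (z : \bar R) :
  (forall X, finite_set X -> X `<=` B -> exists n, X `<=` A n) ->
  (forall n, \esum_(t in A n) a t <= z) -> \esum_(t in B) a t <= z.
Proof.
move=> H Hz; apply: ge_ereal_sup => _ [X [finX XB] <-].
have [n Xn] := H X finX XB; apply: le_trans (Hz n); apply: esum_ge.
by exists X.
Qed.

End Aux.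

Section Chain.
Variables (R : realType) (s d : nat) (q : 'I_s -> 'I_s -> {ffun 'I_d -> nat} -> R).
Hypothesis q0 : forall i j k, (0 <= q i j k)%R.
Local Notation T := (traj s d).
Local Notation P := (traj_prob q).
Local Notation K := ({ffun 'I_d -> nat}).

Lemma P0 i (t : T) : (0 <= P i t)%R.
Proof.
elim: t i => [|[r k] t IH] i /=; first exact: ler01.
by rewrite mulr_ge0.
Qed.

Lemma decomp (B : set T) (f : T -> \bar R) : ~ B [::] -> (forall t, 0 <= f t) ->
  \esum_(t in B) f t = \sum_(r < s) \esum_(k in [set: K])
     \esum_(t' in [set t' | B ((r, k) :: t')]) f ((r, k) :: t').
Proof.
move=> Bn f0.
rewrite (reindex_esum ([set: 'I_s * K] `*`` (fun x => [set t' | B (x :: t')])) B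
  (fun y => y.1 :: y.2)); last first.
  split.
  - by move=> [x t'] [_ /=].
  - by move=> [x1 t1] [x2 t2] _ _ /= [-> ->].
  - move=> [|x t'] Bt; first by [].
    by exists (x, t').
rewrite -(esum_esum (a := fun x t' => f (x :: t'))) //.
have -> : [set: 'I_s * K] = [set: 'I_s] `*`` (fun _ => [set: K]).
  by apply/seteqP; split.
transitivity (\esum_(x in [set: 'I_s] `*`` (fun _ => [set: K]))
   \esum_(t' in [set t' | B ((x.1, x.2) :: t')]) f ((x.1, x.2) :: t')).
  by apply: eq_esum => -[r k].
rewrite -(esum_esum (a := fun r k => \esum_(t' in [set t' | B ((r, k) :: t')]) f ((r, k) :: t'))).
  rewrite esum_ord // => r; apply: esum_ge0 => k _; exact: esum_ge0.
by move=> r k _ _; exact: esum_ge0.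
Qed.

Definition FPn (j : 'I_s) (N : nat) : set T :=
  [set t : T | first_passage j t /\ (size t <= N)%N].

Lemma FP_nil j : ~ FP j ([::] : T).
Proof. by []. Qed.

Lemma FPn_nil j N : ~ FPn j N ([::] : T).
Proof. by case. Qed.

Lemma tail_FP j r k :
  [set t' | FP j ((r, k) :: t')] = if r == j then [set ([::] : T)] else FP j.
Proof.
apply/seteqP; split => t' /=; rewrite /FP /=.
  case: t' => [|x t'] /=; first by move=> ->.
  by case/andP => /negPf ->.
case: ifP => rj.
  by move=> ->.
case: t' => [|x t'] //= ->; by rewrite rj.
Qed.

Lemma tail_FPn j N r k :
  [set t' | FPn j N.+1 ((r, k) :: t')] = if r == j then [set ([::] : T)] else FPn j N.
Proof.
apply/seteqP; split => t' /=; rewrite /FPn /=.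
  case: t' => [|x t'] /=; first by move=> [->].
  by case=> /andP[/negPf ->] ? ?.
case: ifP => rj.
  by move=> ->.
by case: t' => [|x t'] //=.
Qed.

Lemma decompA j (B B' : set T) (f : T -> \bar R) : ~ B [::] -> (forall t, 0 <= f t) ->
  (forall r k, [set t' | B ((r, k) :: t')] = if r == j then [set ([::] : T)] else B') ->
  \esum_(t in B) f t = \esum_(k in [set: K]) f [:: (j, k)] +
    \sum_(r < s | r != j) \esum_(k in [set: K]) \esum_(t' in B') f ((r, k) :: t').
Proof.
move=> Bn f0 tl; rewrite decomp // (bigD1 j) //=; congr (_ + _).
  by apply: eq_esum => k _; rewrite tl eqxx esum_set1.
by apply: eq_bigr => r /negPf rj; apply: eq_esum => k _; rewrite tl rj.
Qed.

Definition EW (B : set T) (w : T -> R) i := \esum_(t in B) (P i t * w t)%:E.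
Definition aK (g : K -> R) i r := \esum_(k in [set: K]) (q i r k * g k)%:E.

Lemma EW_ge0 B w i : (forall t, 0 <= w t)%R -> 0 <= EW B w i.
Proof. by move=> w0; apply: esum_ge0 => t _; rewrite lee_fin mulr_ge0 // P0. Qed.

Lemma aK_ge0 g i r : (forall k, 0 <= g k)%R -> 0 <= aK g i r.
Proof. by move=> g0; apply: esum_ge0 => t _; rewrite lee_fin mulr_ge0. Qed.

Lemma esum2D (B' : set T) (F1 F2 : K -> T -> \bar R) :
  (forall k t, 0 <= F1 k t) -> (forall k t, 0 <= F2 k t) ->
  \esum_(k in [set: K]) \esum_(t in B') (F1 k t + F2 k t) =
  \esum_(k in [set: K]) \esum_(t in B') F1 k t +
  \esum_(k in [set: K]) \esum_(t in B') F2 k t.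
Proof.
move=> h1 h2; rewrite -esumD; last 2 first.
- by move=> k _; apply: esum_ge0.
- by move=> k _; apply: esum_ge0.
by apply: eq_esum => k _; rewrite esumD.
Qed.

Lemma inner (B' : set T) g h i r : (forall k, 0 <= g k)%R -> (forall t, 0 <= h t)%R ->
  \esum_(k in [set: K]) \esum_(t in B') ((q i r k * g k)%:E * (P r t * h t)%:E)
  = aK g i r * EW B' h r.
Proof.
move=> g0 h0.
transitivity (\esum_(k in [set: K]) ((q i r k * g k)%:E * EW B' h r)).
  apply: eq_esum => k _; rewrite esumZl ?mulr_ge0 //.
  by move=> t; rewrite lee_fin mulr_ge0 // P0.
rewrite esumZr //; first exact: EW_ge0.
by move=> k; rewrite lee_fin mulr_ge0.
Qed.

Definition w0 : T -> R := fun _ => 1%R.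
Definition w1 u : T -> R := fun t => (coordS u t)%:R.
Definition w2 u v : T -> R := fun t => (coordS u t * coordS v t)%:R.
Definition g0 : K -> R := fun _ => 1%R.
Definition g1 u : K -> R := fun k => (k u)%:R.
Definition g2 u v : K -> R := fun k => (k u * k v)%:R.

Lemma coordS_cons u r k (t : T) : coordS u ((r, k) :: t) = (k u + coordS u t)%N.
Proof. by rewrite /coordS big_cons. Qed.

Ltac nn_tac := move=> *; repeat apply: adde_ge0; rewrite /g0 /g1 /g2 /w0 /w1 /w2 -?EFinM ?lee_fin;
  repeat apply: mulr_ge0; rewrite ?P0 ?q0 ?ler0n ?ler01 //.

Definition tailP j (B B' : set T) :=
  forall r k, [set t' | B ((r, k) :: t')] = if r == j then [set ([::] : T)] else B'.

Lemma step0 j (B B' : set T) i : ~ B [::] -> tailP j B B' ->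
  EW B w0 i = aK g0 i j + \sum_(r < s | r != j) aK g0 i r * EW B' w0 r.
Proof.
move=> Bn tl; rewrite /EW (decompA (j := j) (B' := B')) //; last by nn_tac.
congr (_ + _).
  by apply: eq_esum => k _ /=; rewrite /w0 /g0 !mulr1.
apply: eq_bigr => r _; rewrite -inner; try by nn_tac.
by apply: eq_esum => k _; apply: eq_esum => t _ /=; rewrite -EFinM /g0 /w0 !mulr1.
Qed.

Lemma step1 j (B B' : set T) u i : ~ B [::] -> tailP j B B' ->
  EW B (w1 u) i = aK (g1 u) i j + \sum_(r < s | r != j)
    (aK (g1 u) i r * EW B' w0 r + aK g0 i r * EW B' (w1 u) r).
Proof.
move=> Bn tl; rewrite /EW (decompA (j := j) (B' := B')) //; last by nn_tac.
congr (_ + _).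
  apply: eq_esum => k _ /=; rewrite /w1 /g1 coordS_cons /coordS big_nil.
  by rewrite mulr1 addn0.
apply: eq_bigr => r _; rewrite -!inner; try by nn_tac.
rewrite -esum2D; try by nn_tac.
apply: eq_esum => k _; apply: eq_esum => t _ /=; rewrite -!EFinM -EFinD.
by rewrite /g0 /g1 /w0 /w1 coordS_cons natrD; congr EFin; ring.
Qed.

Lemma step2 j (B B' : set T) u v i : ~ B [::] -> tailP j B B' ->
  EW B (w2 u v) i = aK (g2 u v) i j + \sum_(r < s | r != j)
    (aK (g2 u v) i r * EW B' w0 r + aK (g1 u) i r * EW B' (w1 v) r
     + aK (g1 v) i r * EW B' (w1 u) r + aK g0 i r * EW B' (w2 u v) r).
Proof.
move=> Bn tl; rewrite /EW (decompA (j := j) (B' := B')) //; last by nn_tac.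
congr (_ + _).
  apply: eq_esum => k _ /=; rewrite /w2 /g2 !coordS_cons /coordS !big_nil.
  by rewrite mulr1 !addn0.
apply: eq_bigr => r _; rewrite -!inner; try by nn_tac.
rewrite -!esum2D; try by nn_tac.
apply: eq_esum => k _; apply: eq_esum => t _ /=; rewrite -!EFinM -!EFinD.
rewrite /g0 /g1 /g2 /w0 /w1 /w2 !coordS_cons !natrM !natrD; congr EFin; ring.
Qed.

Hypothesis hsum : forall i, \sum_(j < s) pE q i j = 1.

Lemma pE_aK i r : pE q i r = aK g0 i r.
Proof. by apply: eq_esum => k _; rewrite /g0 mulr1. Qed.

Lemma pE_ge0 i r : 0 <= pE q i r.
Proof. by apply: esum_ge0 => k _; rewrite lee_fin. Qed.

Lemma pE_le1 i r : pE q i r <= 1.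
Proof.
rewrite -(hsum i) (bigD1 r) //= leeDl //; apply: sume_ge0 => k _; exact: pE_ge0.
Qed.

Lemma pE_fin i r : pE q i r = (p q i r)%:E.
Proof.
rewrite /p fineK // ge0_fin_numE ?pE_ge0 //.
exact: le_lt_trans (pE_le1 i r) (ltey _).
Qed.

Lemma p_ge0 i r : (0 <= p q i r)%R.
Proof. by rewrite -lee_fin -pE_fin pE_ge0. Qed.

Lemma p_sum1 i : (\sum_(r < s) p q i r)%R = 1%R.
Proof.
apply: EFin_inj; rewrite -sumEFin -(hsum i); apply: eq_bigr => r _.
by rewrite pE_fin.
Qed.

Lemma aK0_p i r : aK g0 i r = (p q i r)%:E.
Proof. by rewrite -pE_aK pE_fin. Qed.

Lemma p0_q i r k : p q i r = 0%R -> q i r k = 0%R.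
Proof.
move=> h; apply/eqP; rewrite eq_le q0 andbT -lee_fin -h -pE_fin.
exact: (esum_term (fun k => (q i r k)%:E)).
Qed.

Lemma m1c_aK u i r : (p q i r)%:E * m1c q u i r = aK (g1 u) i r.
Proof.
rewrite /m1c; case: ifPn => [/eqP h|h].
  rewrite mule0; apply/esym; apply: esum1 => k _.
  by rewrite p0_q // mul0r.
rewrite muleCA -EFinM mulfV // mule1.
by apply: eq_esum.
Qed.

Lemma EW0 j w i : EW (FPn j 0) w i = 0.
Proof. by apply: esum1 => -[|x t] [h hs]. Qed.

Lemma tailP_FP j : tailP j (FP j) (FP j).
Proof. move=> r k; exact: tail_FP. Qed.

Lemma tailP_FPn j N : tailP j (FPn j N.+1) (FPn j N).
Proof. move=> r k; exact: tail_FPn. Qed.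

Lemma FPn_sub j N : FPn j N `<=` FP j.
Proof. by move=> t []. Qed.

Lemma EW_sub j N w i : (forall t, 0 <= w t)%R -> EW (FPn j N) w i <= EW (FP j) w i.
Proof.
move=> w0; apply: esum_sub; first exact: FPn_sub.
by move=> t; rewrite lee_fin mulr_ge0 // P0.
Qed.

Lemma EW_lim j w i z : (forall N, EW (FPn j N) w i <= z) -> EW (FP j) w i <= z.
Proof.
move=> H; apply: (esum_le_lim (A := FPn j)) => // X finX XB.
have [F XF] := finite_fsetP.1 finX; rewrite XF.
exists (\max_(t <- finmap.enum_fset F) size t)%N => t /= tF; rewrite /FPn /=; split.
  by apply: XB; rewrite XF.
by apply: leq_bigmax_seq.
Qed.

Lemma sum_aK0 i : aK g0 i i = aK g0 i i.
Proof. by []. Qed.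

Lemma sumD1_aK0 j i :
  aK g0 i j + \sum_(r < s | r != j) aK g0 i r = 1.
Proof.
rewrite -(hsum i) [RHS](bigD1 j) //=; congr (_ + _); first by rewrite pE_aK.
by apply: eq_bigr => r _; rewrite pE_aK.
Qed.

Lemma HN_le1 j N i : EW (FPn j N) w0 i <= 1.
Proof.
elim: N i => [|N IH] i; first by rewrite EW0.
rewrite (step0 (j := j) (B' := FPn j N)) //; last exact: tailP_FPn.
rewrite -(sumD1_aK0 j i) leeD2l //; apply: lee_sum => r _.
rewrite -[leRHS]mule1; apply: lee_wpmul2l => //; apply: aK_ge0 => k.
  exact: ler01.
exact: FPn_nil.
Qed.

Lemma H_le1 j i : EW (FP j) w0 i <= 1.
Proof. apply: EW_lim => N; exact: HN_le1. Qed.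

Lemma path_bad (bad : pred 'I_s) j : irreducible q ->
  (forall a b, b != j -> (0 < p q a b)%R -> bad b -> bad a) -> forall r, bad r -> bad j.
Proof.
move=> irr cl r br; have /connectP [pth pp le] := irr j r.
have aux : forall pth a, path (fun a b => (0 < p q a b)%R) a pth ->
    bad (last a pth) -> bad a \/ bad j.
  elim => [|b pth' IH] a /=; first by left.
  move=> /andP [pab pth2] bl; case: (IH b pth2 bl) => [bb|]; last by right.
  case: (eqVneq b j) => [e|bj]; first by right; rewrite -e.
  by left; exact: cl bj pab bb.
by have := aux pth j pp; rewrite -le => /(_ br) [].
Qed.

Lemma path_bad_all (bad : pred 'I_s) j : irreducible q ->
  (forall a b, (0 < p q a b)%R -> bad b -> bad a) -> bad j -> forall i, bad i.
Proof.
move=> irr cl bj i; have /connectP [pth pp le] := irr i j.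
have aux : forall pth a, path (fun a b => (0 < p q a b)%R) a pth ->
    bad (last a pth) -> bad a.
  elim => [|b pth' IH] a //= /andP [pab pth2] bl.
  exact: cl pab (IH b pth2 bl).
by apply: (aux pth i pp); rewrite -le.
Qed.

Lemma nu_pos (nu : 'I_s -> R) : stationary q nu -> irreducible q -> forall j, (0 < nu j)%R.
Proof.
move=> [nu0 [nus nust]] irr j; rewrite lt0r nu0 andbT; apply/negP => /eqP nj.
have all0 := path_bad_all (bad := fun i => nu i == 0%R) irr.
have : forall i, nu i == 0%R.
  apply: (all0 j) => [a b pab /eqP nb|]; last by rewrite nj.
  have : (nu a * p q a b <= 0)%R.
    rewrite -nb -(nust b) (bigD1 a) //= lerDl; apply: sumr_ge0 => i _.
    by rewrite mulr_ge0 ?p_ge0.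
  move=> h; have : (nu a * p q a b == 0)%R.
    by rewrite eq_le h mulr_ge0 ?p_ge0.
  by rewrite mulf_eq0 => /orP [//|/eqP pz]; move: pab; rewrite pz ltxx.
move=> H; move: nus; rewrite big1 => [/eqP|i _]; last exact/eqP.
by rewrite eq_sym oner_eq0.
Qed.

Lemma linsys (nu : 'I_s -> R) j (x c : 'I_s -> \bar R) :
  stationary q nu ->
  (forall i, 0 <= c i) -> (forall i, 0 <= x i) ->
  (forall i, x i = c i + \sum_(r < s | r != j) (p q i r)%:E * x r) ->
  (forall r, r != j -> x r \is a fin_num) ->
  (nu j)%:E * x j = \sum_(i < s) (nu i)%:E * c i.
Proof.
move=> [nu0 [_ nust]] c0 x0 xe xf.
have sp : forall i, 0 <= \sum_(r < s | r != j) (p q i r)%:E * x r.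
  by move=> i; apply: sume_ge0 => r _; rewrite mule_ge0 // lee_fin p_ge0.
have e1 : \sum_(i < s) (nu i)%:E * x i = \sum_(i < s) (nu i)%:E * c i +
    \sum_(r < s | r != j) (nu r)%:E * x r.
  transitivity (\sum_(i < s) ((nu i)%:E * c i +
      (nu i)%:E * \sum_(r < s | r != j) (p q i r)%:E * x r)).
    by apply: eq_bigr => i _; rewrite {1}xe ge0_muleDr.
  rewrite big_split /=; congr (_ + _).
  transitivity (\sum_(i < s) \sum_(r < s | r != j) (nu i)%:E * ((p q i r)%:E * x r)).
    apply: eq_bigr => i _; rewrite ge0_sume_distrr // => r _.
    by rewrite mule_ge0 // lee_fin p_ge0.
  rewrite exchange_big /=; apply: eq_bigr => r _.
  rewrite -(nust r) -sumEFin ge0_sume_distrl /=; last first.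
    by move=> i _; rewrite lee_fin mulr_ge0 ?p_ge0.
  by apply: eq_bigr => i _; rewrite muleA -EFinM.
have e2 : \sum_(i < s) (nu i)%:E * x i = (nu j)%:E * x j +
    \sum_(r < s | r != j) (nu r)%:E * x r by rewrite (bigD1 j).
have Sf : \sum_(r < s | r != j) (nu r)%:E * x r \is a fin_num.
  by apply/sum_fin_numP => r _ rj; rewrite fin_numM // xf.
have := congr1 (fun z => z - \sum_(r < s | r != j) (nu r)%:E * x r) (etrans (esym e2) e1).
by rewrite /= !addeK.
Qed.

Lemma H_fin j r : EW (FP j) w0 r = (fine (EW (FP j) w0 r))%:E.
Proof.
rewrite fineK // ge0_fin_numE; last by apply: EW_ge0 => t; exact: ler01.
exact: le_lt_trans (H_le1 j r) (ltey _).
Qed.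

Lemma hit1 j : irreducible q -> EW (FP j) w0 j = 1 -> forall r, EW (FP j) w0 r = 1.
Proof.
move=> irr hj.
pose hR r := fine (EW (FP j) w0 r).
have hE r : EW (FP j) w0 r = (hR r)%:E by exact: H_fin.
have hle r : (hR r <= 1)%R by rewrite -lee_fin -hE H_le1.
have heq i : hR i = (p q i j + \sum_(r < s | r != j) p q i r * hR r)%R.
  apply: EFin_inj; rewrite -hE (step0 (j := j) (B' := FP j)) //; last exact: tailP_FP.
  rewrite EFinD aK0_p -sumEFin; congr (_ + _); apply: eq_bigr => r _.
  by rewrite aK0_p hE EFinM.
have psum i : (p q i j + \sum_(r < s | r != j) p q i r = 1)%R.
  by rewrite -(p_sum1 i) [in RHS](bigD1 j).
suff H : forall r, hR r == 1%R by move=> r; rewrite hE (eqP (H r)).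
have cl : forall a b, b != j -> (0 < p q a b)%R -> hR b != 1%R -> hR a != 1%R.
  move=> a b bj pab hb; apply/negP => /eqP ha.
  have key : (\sum_(r < s | r != j) p q a r * (1 - hR r) = 1 - hR a)%R.
    under eq_bigr do rewrite mulrBr mulr1.
    rewrite sumrB (heq a) -{1}(psum a); lra.
  have h1 : (0 < p q a b * (1 - hR b))%R.
    by rewrite mulr_gt0 // subr_gt0 lt_neqAle hb hle.
  have h2 : (p q a b * (1 - hR b) <= \sum_(r < s | r != j) p q a r * (1 - hR r))%R.
    rewrite (bigD1 b) //= lerDl; apply: sumr_ge0 => r _.
    by rewrite mulr_ge0 ?p_ge0 // subr_ge0.
  move: h1 h2; rewrite key ha; lra.
move=> r; apply/negPn/negP => br.
have := path_bad (bad := fun r => hR r != 1%R) irr cl br.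
have : (hR j)%:E = 1 by rewrite -hE hj.
by move=> [->]; rewrite eqxx.
Qed.

Lemma term_le j (x c : 'I_s -> \bar R) a b : (0 <= c a) -> (forall r, 0 <= x r) ->
  x a = c a + \sum_(r < s | r != j) (p q a r)%:E * x r -> b != j ->
  (p q a b)%:E * x b <= x a.
Proof.
move=> c0 x0 xe bj; rewrite xe; apply: lee_paddl => //.
rewrite (bigD1 b) //= leeDl //; apply: sume_ge0 => r _.
by rewrite mule_ge0 // lee_fin p_ge0.
Qed.

Lemma inf_to_j j (x c : 'I_s -> \bar R) : irreducible q ->
  (forall i, 0 <= c i) -> (forall i, 0 <= x i) ->
  (forall i, x i = c i + \sum_(r < s | r != j) (p q i r)%:E * x r) ->
  forall r, x r = +oo -> x j = +oo.
Proof.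
move=> irr c0 x0 xe r br.
have cl : forall a b, b != j -> (0 < p q a b)%R -> x b == +oo -> x a == +oo.
  move=> a b bj pab /eqP xb; rewrite -leye_eq -[leLHS](gt0_muley (x := (p q a b)%:E)).
    by rewrite -xb (term_le (j := j) (c := c)).
  by rewrite lte_fin.
have := path_bad (bad := fun r => x r == +oo) (j := j) irr cl (r := r).
by rewrite /= br eqxx => /(_ isT) /eqP.
Qed.

Lemma fin_from_j j (x c : 'I_s -> \bar R) : irreducible q ->
  (forall i, 0 <= c i) -> (forall i, 0 <= x i) ->
  (forall i, x i = c i + \sum_(r < s | r != j) (p q i r)%:E * x r) ->
  x j < +oo -> forall r, x r \is a fin_num.
Proof.
move=> irr c0 x0 xe xj r; rewrite ge0_fin_numE //; rewrite ltey; apply/negP => /eqP br.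
by move: xj; rewrite (inf_to_j irr c0 x0 xe br) ltxx.
Qed.

Lemma regroup j (a : \bar R) (A B C D : 'I_s -> \bar R) :
  (forall r, 0 <= A r) -> (forall r, 0 <= B r) -> (forall r, 0 <= C r) -> (forall r, 0 <= D r) ->
  a + \sum_(r < s | r != j) (A r + B r + C r + D r) =
  (a + \sum_(r < s | r != j) A r) + \sum_(r < s | r != j) (B r + C r)
    + \sum_(r < s | r != j) D r.
Proof.
move=> A0 B0 C0 D0.
rewrite (eq_bigr (fun r => (A r + (B r + C r)) + D r)); last by move=> r _; rewrite !addeA.
by rewrite !big_split /= !addeA.
Qed.

Lemma m2E u v i j : m2 q u v i = aK (g2 u v) i j + \sum_(r < s | r != j) aK (g2 u v) i r.
Proof. by rewrite /m2 (bigD1 j). Qed.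

Definition c2 j u v i := m2 q u v i + \sum_(r < s | r != j)
  (aK (g1 u) i r * EW (FP j) (w1 v) r + aK (g1 v) i r * EW (FP j) (w1 u) r).

Lemma x2_eq j u v i : (forall r, EW (FP j) w0 r = 1) ->
  EW (FP j) (w2 u v) i = c2 j u v i + \sum_(r < s | r != j) (p q i r)%:E * EW (FP j) (w2 u v) r.
Proof.
move=> h1; rewrite (step2 (j := j) (B' := FP j)) //; last exact: tailP_FP.
rewrite (eq_bigr (fun r => aK (g2 u v) i r + aK (g1 u) i r * EW (FP j) (w1 v) r
   + aK (g1 v) i r * EW (FP j) (w1 u) r + (p q i r)%:E * EW (FP j) (w2 u v) r)); last first.
  by move=> r _; rewrite h1 mule1 aK0_p.
rewrite regroup; last 4 first.
- by move=> r; apply: aK_ge0 => k.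
- by move=> r; rewrite mule_ge0 //; [apply: aK_ge0 => k|apply: EW_ge0 => t].
- by move=> r; rewrite mule_ge0 //; [apply: aK_ge0 => k|apply: EW_ge0 => t].
- by move=> r; rewrite mule_ge0 ?lee_fin ?p_ge0 //; apply: EW_ge0 => t.
by rewrite /c2 (m2E u v i j).
Qed.

Lemma x2N_le j u v (z : 'I_s -> \bar R) :
  (forall i, 0 <= z i) ->
  (forall i, c2 j u v i + \sum_(r < s | r != j) (p q i r)%:E * z r <= z i) ->
  forall N i, EW (FPn j N) (w2 u v) i <= z i.
Proof.
move=> z0 zs; elim => [|N IH] i; first by rewrite EW0.
rewrite (step2 (j := j) (B' := FPn j N)) //; last 2 first.
- exact: FPn_nil.
- exact: tailP_FPn.
apply: le_trans (zs i); rewrite /c2 (m2E u v i j) -regroup; last 4 first.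
- by move=> r; apply: aK_ge0 => k.
- by move=> r; rewrite mule_ge0 //; [apply: aK_ge0 => k|apply: EW_ge0 => t].
- by move=> r; rewrite mule_ge0 //; [apply: aK_ge0 => k|apply: EW_ge0 => t].
- by move=> r; rewrite mule_ge0 ?lee_fin ?p_ge0 //.
rewrite leeD2l //; apply: lee_sum => r _.
have a2 := aK_ge0 (g := g2 u v) i r; have a1u := aK_ge0 (g := g1 u) i r.
have a1v := aK_ge0 (g := g1 v) i r.
repeat apply: leeD.
- rewrite -[leRHS]mule1; apply: lee_wpmul2l; [exact: a2|exact: HN_le1].
- apply: lee_wpmul2l; [exact: a1u|exact: EW_sub].
- apply: lee_wpmul2l; [exact: a1v|exact: EW_sub].
- rewrite aK0_p; apply: lee_wpmul2l; [by rewrite lee_fin p_ge0|exact: IH].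
Qed.

Lemma x1_eq j u i : (forall r, EW (FP j) w0 r = 1) ->
  EW (FP j) (w1 u) i = m1 q u i + \sum_(r < s | r != j) (p q i r)%:E * EW (FP j) (w1 u) r.
Proof.
move=> h1; rewrite (step1 (j := j) (B' := FP j)) //; last exact: tailP_FP.
have -> : m1 q u i = aK (g1 u) i j + \sum_(r < s | r != j) aK (g1 u) i r.
  by rewrite /m1 (bigD1 j).
rewrite -addeA; congr (_ + _).
rewrite -big_split /=; apply: eq_bigr => r _.
by rewrite h1 mule1 aK0_p.
Qed.

Lemma m1_sum_ge1 i : (forall i r, q i r (zero_time d) = 0%R) ->
  1 <= \sum_(w < d) m1 q w i.
Proof.
move=> qz; rewrite /m1 exchange_big /= -(hsum i); apply: lee_sum => r _.
rewrite -esum_sum; last by move=> k w _ _; rewrite lee_fin mulr_ge0.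
apply: le_esum => k _; rewrite sumEFin lee_fin -mulr_sumr.
have [->|kn] := eqVneq k (zero_time d); first by rewrite qz mul0r.
have [w kw] : exists w, k w != 0%N.
  apply/existsP; apply: contraNT kn => /existsPn H; apply/eqP/ffunP => w.
  by rewrite ffunE; apply/eqP; have := H w; rewrite negbK.
rewrite ler_peMr //; apply: le_trans (_ : ((k w)%:R <= _)%R).
  by rewrite ler1n lt0n.
by rewrite (bigD1 w) //= lerDl sumr_ge0.
Qed.

Lemma m1_ge0 w i : 0 <= m1 q w i.
Proof. by apply: sume_ge0 => r _; apply: esum_ge0 => k _; rewrite lee_fin mulr_ge0. Qed.

Lemma x1_fin j w : irreducible q -> (forall r, EW (FP j) w0 r = 1) ->
  EW (FP j) (w1 w) j < +oo -> forall r, EW (FP j) (w1 w) r \is a fin_num.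
Proof.
move=> irr h1 xj; apply: (fin_from_j (c := m1 q w)) => //; last exact: xj.
- by move=> i; exact: m1_ge0.
- by move=> i; apply: EW_ge0 => t.
- by move=> i; exact: x1_eq.
Qed.

Lemma x2_fin j u v : irreducible q -> (forall r, EW (FP j) w0 r = 1) ->
  (forall i r, q i r (zero_time d) = 0%R) ->
  (forall w, EW (FP j) (w1 w) j < +oo) -> (forall i, c2 j u v i \is a fin_num) ->
  forall i, EW (FP j) (w2 u v) i \is a fin_num.
Proof.
move=> irr h1 qz x1j c2f.
have x1f w r := x1_fin irr h1 (x1j w) r.
pose y i := \sum_(w < d) EW (FP j) (w1 w) i.
have y0 i : 0 <= y i by apply: sume_ge0 => w _; apply: EW_ge0 => t.
have yf i : y i \is a fin_num by apply/sum_fin_numP => w _ _; exact: x1f.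
have yeq i : y i = \sum_(w < d) m1 q w i + \sum_(r < s | r != j) (p q i r)%:E * y r.
  rewrite /y (eq_bigr (fun w => m1 q w i + \sum_(r < s | r != j) (p q i r)%:E
      * EW (FP j) (w1 w) r)); last by move=> w _; exact: x1_eq.
  rewrite big_split /=; congr (_ + _); rewrite exchange_big /=.
  apply: eq_bigr => r _; rewrite ge0_sume_distrr // => w _.
  by apply: EW_ge0 => t.
have c20 i : 0 <= c2 j u v i.
  rewrite /c2; apply: adde_ge0; first by apply: sume_ge0 => r _; apply: esum_ge0 => k _;
    rewrite lee_fin mulr_ge0.
  apply: sume_ge0 => r _; apply: adde_ge0; apply: mule_ge0;
    by [apply: aK_ge0 => k|apply: EW_ge0 => t].
pose C := (\sum_(i < s) fine (c2 j u v i))%R.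
have C0 : (0 <= C)%R by apply: sumr_ge0 => i _; apply: fine_ge0.
have cC i : c2 j u v i <= C%:E.
  rewrite -(fineK (c2f i)) lee_fin /C (bigD1 i) //= lerDl.
  by apply: sumr_ge0 => r _; apply: fine_ge0.
pose z i := C%:E * y i.
have z0 i : 0 <= z i by rewrite mule_ge0.
have zs i : c2 j u v i + \sum_(r < s | r != j) (p q i r)%:E * z r <= z i.
  rewrite /z [y i](yeq i) ge0_muleDr //; last 2 first.
  - by apply: sume_ge0 => w _; exact: m1_ge0.
  - by apply: sume_ge0 => r _; rewrite mule_ge0 // lee_fin p_ge0.
  apply: leeD.
    apply: le_trans (cC i) _; rewrite -[leLHS]mule1; apply: lee_wpmul2l.
      by rewrite lee_fin.
    exact: m1_sum_ge1.
  rewrite ge0_sume_distrr; last by move=> r _; rewrite mule_ge0 // lee_fin p_ge0.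
  by apply: lee_sum => r _; rewrite muleCA.
move=> i; rewrite ge0_fin_numE; last by apply: EW_ge0 => t.
apply: le_lt_trans (_ : z i < +oo); last by rewrite -ge0_fin_numE // fin_numM.
by apply: EW_lim => N; exact: x2N_le.
Qed.

Lemma mu1E u i j : mu1 q u i j = EW (FP j) (w1 u) i.
Proof. by apply: eq_esum => t _; rewrite EFinM. Qed.

Lemma mu2E u v i j : mu2 q u v i j = EW (FP j) (w2 u v) i.
Proof. by apply: eq_esum => t _; rewrite EFinM. Qed.

Lemma prob_hitE i j : prob_hit q i j = EW (FP j) w0 i.
Proof. by apply: eq_esum => t _; rewrite /w0 mulr1. Qed.

Lemma m1c_ge0 u i r : 0 <= m1c q u i r.
Proof.
rewrite /m1c; case: ifP => // _; apply: mule_ge0.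
  by apply: esum_ge0 => k _; rewrite lee_fin mulr_ge0.
by rewrite lee_fin invr_ge0 p_ge0.
Qed.

Lemma divE (a : R) (x S : \bar R) : (0 < a)%R -> a%:E * x = S -> x = S * (a^-1)%:E.
Proof.
move=> a0 <-; rewrite muleC muleA -EFinM mulVf ?mul1e //.
by rewrite gt_eqF.
Qed.

Lemma rhs2 (nu : 'I_s -> R) j u v : (forall i, 0 <= nu i)%R ->
  (\sum_(i < s) (nu i)%:E * m2 q u v i) * ((nu j)^-1)%:E
  + (\sum_(i < s) \sum_(r < s | r != j)
       (nu i)%:E * (p q i r)%:E *
       (m1c q u i r * mu1 q v r j + m1c q v i r * mu1 q u r j))
    * ((nu j)^-1)%:E
  = (\sum_(i < s) (nu i)%:E * c2 j u v i) * ((nu j)^-1)%:E.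
Proof.
move=> nu0.
have m20 i : 0 <= m2 q u v i.
  by apply: sume_ge0 => r _; apply: esum_ge0 => k _; rewrite lee_fin mulr_ge0.
have X0 i r : 0 <= m1c q u i r * mu1 q v r j + m1c q v i r * mu1 q u r j.
  by apply: adde_ge0; apply: mule_ge0; rewrite ?m1c_ge0 // mu1E; apply: EW_ge0 => t.
rewrite -ge0_muleDl; last 2 first.
- by apply: sume_ge0 => i _; rewrite mule_ge0 ?lee_fin.
- apply: sume_ge0 => i _; apply: sume_ge0 => r _.
  by rewrite mule_ge0 // mule_ge0 ?lee_fin ?p_ge0.
congr (_ * _).
transitivity (\sum_(i < s) ((nu i)%:E * m2 q u v i + (nu i)%:E * \sum_(r < s | r != j)
  (aK (g1 u) i r * EW (FP j) (w1 v) r + aK (g1 v) i r * EW (FP j) (w1 u) r))); last first.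
  apply: eq_bigr => i _; rewrite /c2 ge0_muleDr //.
  apply: sume_ge0 => r _; apply: adde_ge0; apply: mule_ge0;
    by [apply: aK_ge0 => k|apply: EW_ge0 => t].
rewrite big_split /=; congr (_ + _); apply: eq_bigr => i _.
rewrite ge0_sume_distrr; last first.
  move=> r _; apply: adde_ge0; apply: mule_ge0;
    by [apply: aK_ge0 => k|apply: EW_ge0 => t].
apply: eq_bigr => r _; rewrite -muleA; congr (_ * _).
rewrite ge0_muleDr; last 2 first.
- by apply: mule_ge0; rewrite ?m1c_ge0 // mu1E; apply: EW_ge0 => t.
- by apply: mule_ge0; rewrite ?m1c_ge0 // mu1E; apply: EW_ge0 => t.
by rewrite !muleA !m1c_aK !mu1E.
Qed.

End Chain.

Unset Implicit Arguments.

Theorem proposition12 (R : realType) (s d : nat)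
  (q : 'I_s -> 'I_s -> {ffun 'I_d -> nat} -> R) (nu : 'I_s -> R) :
  is_mt_kernel q -> irreducible q -> ergodic q -> stationary q nu ->
  forall (j : 'I_s) (u v : 'I_d),
    [/\ mu1 q u j j = (\sum_(i < s) (nu i)%:E * m1 q u i) * ((nu j)^-1)%:E,
        mu q j j = (fun w => (\sum_(i < s) (nu i)%:E * mvec q i w) * ((nu j)^-1)%:E) &
        mu2 q u v j j =
          (\sum_(i < s) (nu i)%:E * m2 q u v i) * ((nu j)^-1)%:E
          + (\sum_(i < s) \sum_(r < s | r != j)
               (nu i)%:E * (p q i r)%:E *
               (m1c q u i r * mu1 q v r j + m1c q v i r * mu1 q u r j))
            * ((nu j)^-1)%:E].
Proof.
move=> [q0 [qz hs]] irr erg st j u v.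
have nuj := nu_pos q0 hs st irr j.
have hj : EW q (FP j) (w0 R (s:=s) (d:=d)) j = 1.
  by rewrite -prob_hitE; have [[]] := erg u j.
have h1 := hit1 q0 hs irr hj.
have x1j w : EW q (FP j) (w1 R (s:=s) w) j < +oo.
  by rewrite -mu1E; have [[]] := erg w j.
have C1 w : mu1 q w j j = (\sum_(i < s) (nu i)%:E * m1 q w i) * ((nu j)^-1)%:E.
  apply: divE => //; rewrite mu1E; apply: (linsys q0 hs st).
  - by move=> i; exact: m1_ge0.
  - by move=> i; apply: EW_ge0 => t.
  - by move=> i; exact: x1_eq.
  - by move=> r _; exact: x1_fin.
split => //; first by apply: funext => w; exact: C1.
rewrite (rhs2 q0 hs); last by case: st.
rewrite mu2E.
have c20 i : 0 <= c2 q j u v i.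
  rewrite /c2; apply: adde_ge0; first by apply: sume_ge0 => r _; apply: esum_ge0 => k _;
    rewrite lee_fin mulr_ge0.
  apply: sume_ge0 => r _; apply: adde_ge0; apply: mule_ge0;
    by [apply: aK_ge0 => k|apply: EW_ge0 => t].
have x20 i : 0 <= EW q (FP j) (w2 R (s:=s) u v) i by apply: EW_ge0 => t.
have xe i := x2_eq q0 hs u v i h1.
case: (pselect (forall i, c2 q j u v i \is a fin_num)) => [cf|ncf].
  apply: divE => //; apply: (linsys q0 hs st) => //.
  by move=> r _; exact: (x2_fin q0 hs irr h1 qz x1j cf).
case: (pselect (exists i, c2 q j u v i = +oo)) => [[i ci]|H]; last first.
  exfalso; apply: ncf => i; rewrite ge0_fin_numE // ltey; apply/eqP => e.
  by apply: H; exists i.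
have xi : EW q (FP j) (w2 R (s:=s) u v) i = +oo.
  rewrite xe ci addye // gt_eqF // (lt_le_trans _ (sume_ge0 _ _)) ?ltNy0 // => r _.
  by rewrite mule_ge0 ?lee_fin ?p_ge0.
rewrite (inf_to_j q0 hs irr c20 x20 xe xi).
have nui : (0 < nu i)%R by exact: (nu_pos q0 hs st irr i).
have -> : \sum_(i < s) (nu i)%:E * c2 q j u v i = +oo.
  apply/eqP; rewrite eq_le leey /= (bigD1 i) //= ci gt0_muley ?lte_fin //.
  rewrite addye // gt_eqF // (lt_le_trans _ (sume_ge0 _ _)) ?ltNy0 // => r _.
  apply: mule_ge0; [rewrite lee_fin; apply: ltW; exact: (nu_pos q0 hs st irr r)|exact: c20].
by rewrite gt0_mulye // lte_fin invr_gt0.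
Qed.
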